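(* In the setting described in the context, suppose $\mathrm{ev}$ is multiplicative and $\iota$-involutive. Then the following are equivalent: (FM') properties (F) and (M') both hold; (A) every object $W$ of $\mathcal{P}^1$ is a biproduct $W\cong\bigoplus_{i=1}^m\emptyset$ for some $m\in\mathbb{N}_0$.
   Context: Setting. Let $\Bbbk$ be a commutative ring with a ring involution $\iota$. Let $\mathcal{P}$ be a small $\Bbbk$-linear (strict) symmetric monoidal category with monoidal product $\sqcup$ and unit object $\emptyset$, in which every object $W$ has a chosen dual $W^r$, giving the standard identifications $\operatorname{Hom}(W_1,W_2)\cong\operatorname{Hom}(\emptyset,W_2\sqcup W_1^r)\cong\operatorname{Hom}(W_1\sqcup W_2^r,\emptyset)$. (In the paper $\mathcal{P}$ is the category of closed $\mathcal{C}$-labeled webs and prefoams.) Let $\mathrm{tr}_W$ be the categorical trace and $\mathrm{ev}\colon\operatorname{End}_{\mathcal{P}}(\emptyset)\to\Bbbk$ a $\Bbbk$-linear map; multiplicative means $\mathrm{ev}(\mathrm{id}_\emptyset)=1$ and $\mathrm{ev}(\Sigma_1\sqcup\Sigma_2)=\mathrm{ev}(\Sigma_1)\mathrm{ev}(\Sigma_2)$. Let $I_1(W,W')\subseteq\operatorname{Hom}(W,W')$ be the set of $\Sigma$ with $\mathrm{ev}(\mathrm{tr}_W(\Sigma'\circ\Sigma))=0$ for all $\Sigma'\in\operatorname{Hom}(W',W)$ (an ideal) and $\mathcal{P}^1:=\mathcal{P}/I_1$; the pairing $\langle\Sigma',\Sigma\rangle:=\mathrm{ev}(\mathrm{tr}_W(\Sigma'\circ\Sigma))$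 descends to $\mathcal{P}^1$. Reversal structure ($\iota$-involutivity): $\iota$-semilinear maps $(-)^r\colon\operatorname{Hom}(W_1,W_2)\to\operatorname{Hom}(W_2,W_1)$ with $(\Sigma^r)^r=\Sigma$, $(\Sigma_2\circ\Sigma_1)^r=\Sigma_1^r\circ\Sigma_2^r$, $\mathrm{tr}_W(\Sigma^r)=\mathrm{tr}_W(\Sigma)^r$, and $\mathrm{ev}(\Sigma^r)=\iota(\mathrm{ev}(\Sigma))$ for $\Sigma\in\operatorname{End}(\emptyset)$; these descend to $\mathcal{P}^1$. Property (M'): for all $W,W'$ the composition map $\operatorname{Hom}_{\mathcal{P}^1}(\emptyset,W')\otimes\operatorname{Hom}_{\mathcal{P}^1}(W,\emptyset)\to\operatorname{Hom}_{\mathcal{P}^1}(W,W')$ is surjective. Property (F): for all $V,W$ the module $\operatorname{Hom}_{\mathcal{P}^1}(W,V)$ is free of finite rank and $\underline{\Sigma}'\mapsto\langle\underline{\Sigma}'^r,-\rangle$ is a bijection $\operatorname{Hom}_{\mathcal{P}^1}(W,V)\to\operatorname{Hom}_{\mathcal{P}^1}(W,V)^*$. A biproduct $W\cong\bigoplus_{i=1}^m\emptyset$ in $\mathcal{P}^1$ means morphisms $f_i\colon W\to\emptyset$, $g_i\colon\emptyset\to W$ with $f_i\circ g_j=\delta_{ij}\mathrm{id}_\emptyset$ and $\sum_ig_i\circ f_i=\mathrm{id}_W$. *)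

(* Defs.v *)
From HB Require Import structures.
From mathcomp Require Import all_boot all_algebra.
Set Implicit Arguments. Unset Strict Implicit. Unset Printing Implicit Defensive.
Import GRing.Theory.
Local Open Scope ring_scope.

(* Data of a small k-linear strict symmetric monoidal category with chosen  *)
(* (right) duals.                                                           *)
Record ssmc_data (k : comPzRingType) := SSMCData {
  obj : Type;
  Mor : obj -> obj -> lmodType k;
  cmp : forall A B C : obj, Mor B C -> Mor A B -> Mor A C;
  idH : forall A : obj, Mor A A;
  tens : obj -> obj -> obj;
  unitO : obj;
  tensm : forall A B C D : obj, Mor A B -> Mor C D -> Mor (tens A C) (tens B D);
  braid : forall A B : obj, Mor (tens A B) (tens B A);
  dualO : obj -> obj;
  coev : forall A : obj, Mor unitO (tens A (dualO A));
  evm : forall A : obj, Mor (tens (dualO A) A) unitO;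
  tens_assoc : forall A B C : obj, tens (tens A B) C = tens A (tens B C);
  tens_unitl : forall A : obj, tens unitO A = A;
  tens_unitr : forall A : obj, tens A unitO = A
}.

Arguments obj {k} P : rename.
Arguments Mor {k} P A B : rename.
Arguments cmp {k P A B C} g f : rename.
Arguments idH {k P} A : rename.
Arguments tens {k P} A B : rename.
Arguments unitO {k} P : rename.
Arguments tensm {k P A B C D} f g : rename.
Arguments braid {k P} A B : rename.
Arguments dualO {k P} A : rename.
Arguments coev {k P} A : rename.
Arguments evm {k P} A : rename.
Arguments tens_assoc {k P} A B C : rename.
Arguments tens_unitl {k P} A : rename.
Arguments tens_unitr {k P} A : rename.

Definition castH {k : comPzRingType} {P : ssmc_data k} {A A' B B' : obj P}
  (eA : A = A') (eB : B = B') (f : Mor P A B) : Mor P A' B' :=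
  match eA in _ = X return Mor P X B' with
  | erefl => match eB in _ = Y return Mor P A Y with erefl => f end
  end.

Definition is_ssmc {k : comPzRingType} (P : ssmc_data k) : Prop :=
  (forall (A B C D : obj P) (h : Mor P C D) (g : Mor P B C) (f : Mor P A B),
      cmp h (cmp g f) = cmp (cmp h g) f) /\
  (forall (A B : obj P) (f : Mor P A B), cmp (idH B) f = f) /\
  (forall (A B : obj P) (f : Mor P A B), cmp f (idH A) = f) /\
  (forall (A B C : obj P) (a : k) (g g' : Mor P B C) (f : Mor P A B),
      cmp (a *: g + g') f = a *: cmp g f + cmp g' f) /\
  (forall (A B C : obj P) (a : k) (g : Mor P B C) (f f' : Mor P A B),
      cmp g (a *: f + f') = a *: cmp g f + cmp g f') /\
  (forall (A B C A' B' C' : obj P) (g : Mor P B C) (f : Mor P A B)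
          (g' : Mor P B' C') (f' : Mor P A' B'),
      tensm (cmp g f) (cmp g' f') = cmp (tensm g g') (tensm f f')) /\
  (forall A B : obj P, tensm (idH A) (idH B) = idH (tens A B)) /\
  (forall (A B C D : obj P) (a : k) (f f' : Mor P A B) (g : Mor P C D),
      tensm (a *: f + f') g = a *: tensm f g + tensm f' g) /\
  (forall (A B C D : obj P) (a : k) (f : Mor P A B) (g g' : Mor P C D),
      tensm f (a *: g + g') = a *: tensm f g + tensm f g') /\
  (forall (A A' B B' C C' : obj P) (f : Mor P A A') (g : Mor P B B') (h : Mor P C C'),
      tensm (tensm f g) h =
      castH (esym (tens_assoc A B C)) (esym (tens_assoc A' B' C'))
            (tensm f (tensm g h))) /\
  (forall (A B : obj P) (f : Mor P A B),
      tensm (idH (unitO P)) f = castH (esym (tens_unitl A)) (esym (tens_unitl B)) f) /\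
  (forall (A B : obj P) (f : Mor P A B),
      tensm f (idH (unitO P)) = castH (esym (tens_unitr A)) (esym (tens_unitr B)) f) /\
  (forall (A B C D : obj P) (f : Mor P A B) (g : Mor P C D),
      cmp (braid B D) (tensm f g) = cmp (tensm g f) (braid A C)) /\
  (forall A B : obj P, cmp (braid B A) (braid A B) = idH (tens A B)) /\
  (forall A B C : obj P,
      braid A (tens B C) =
      castH erefl (esym (tens_assoc B C A))
        (cmp (tensm (idH B) (braid A C))
             (castH (tens_assoc A B C) (tens_assoc B A C)
                    (tensm (braid A B) (idH C))))) /\
  (forall A : obj P,
      castH erefl (tens_unitr A)
        (cmp (tensm (idH A) (evm A))
             (castH (tens_unitl A) (tens_assoc A (dualO A) A)
                    (tensm (coev A) (idH A)))) = idH A) /\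
  (forall A : obj P,
      castH erefl (tens_unitl (dualO A))
        (cmp (tensm (evm A) (idH (dualO A)))
             (castH (tens_unitr (dualO A)) (esym (tens_assoc (dualO A) A (dualO A)))
                    (tensm (idH (dualO A)) (coev A)))) = idH (dualO A)).

Definition ctr {k : comPzRingType} {P : ssmc_data k} (W : obj P) (f : Mor P W W)
  : Mor P (unitO P) (unitO P) :=
  cmp (evm W) (cmp (braid W (dualO W)) (cmp (tensm f (idH (dualO W))) (coev W))).

Definition tens0 {k : comPzRingType} {P : ssmc_data k}
  (s1 s2 : Mor P (unitO P) (unitO P)) : Mor P (unitO P) (unitO P) :=
  castH (tens_unitl (unitO P)) (tens_unitl (unitO P)) (tensm s1 s2).

Section P1.
Variables (k : comPzRingType) (P : ssmc_data k)
          (ev : Mor P (unitO P) (unitO P) -> k).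

Definition ev_linear : Prop := forall (a : k) (x y : Mor P (unitO P) (unitO P)),
  ev (a *: x + y) = a * ev x + ev y.

Definition ev_multiplicative : Prop :=
  ev (idH (unitO P)) = 1 /\
  forall s1 s2 : Mor P (unitO P) (unitO P), ev (tens0 s1 s2) = ev s1 * ev s2.

Definition pairing {W W' : obj P} (s' : Mor P W' W) (s : Mor P W W') : k :=
  ev (ctr (cmp s' s)).

Definition I1 {W W' : obj P} (s : Mor P W W') : Prop :=
  forall s' : Mor P W' W, pairing s' s = 0.

(* equality of morphisms in P^1 = P / I_1 *)
Definition eq1 {W W' : obj P} (s t : Mor P W W') : Prop := I1 (s - t).

Definition is_reversal (iota : {rmorphism k -> k})
  (rev : forall A B : obj P, Mor P A B -> Mor P B A) : Prop :=
  (forall (A B : obj P) (a : k) (f g : Mor P A B),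
      rev A B (a *: f + g) = iota a *: rev A B f + rev A B g) /\
  (forall (A B : obj P) (f : Mor P A B), rev B A (rev A B f) = f) /\
  (forall (A B C : obj P) (g : Mor P B C) (f : Mor P A B),
      rev A C (cmp g f) = cmp (rev A B f) (rev B C g)) /\
  (forall (W : obj P) (f : Mor P W W), ctr (rev W W f) = rev _ _ (ctr f)).

Definition ev_involutive (iota : {rmorphism k -> k})
  (rev : forall A B : obj P, Mor P A B -> Mor P B A) : Prop :=
  is_reversal iota rev /\
  forall s : Mor P (unitO P) (unitO P), ev (rev _ _ s) = iota (ev s).

(* Property (M'): Hom_{P^1}(∅,W') ⊗ Hom_{P^1}(W,∅) -> Hom_{P^1}(W,W') is onto *)
Definition propM' : Prop :=
  forall (W W' : obj P) (s : Mor P W W'),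
  exists (n : nat) (g : 'I_n -> Mor P (unitO P) W') (f : 'I_n -> Mor P W (unitO P)),
    eq1 s (\sum_(i < n) cmp (g i) (f i)).

Definition propF (rev : forall A B : obj P, Mor P A B -> Mor P B A) : Prop :=
  forall V W : obj P,
  (* Hom_{P^1}(W,V) is free of finite rank *)
  (exists (n : nat) (b : 'I_n -> Mor P W V),
     (forall s : Mor P W V, exists c : 'I_n -> k, eq1 s (\sum_(i < n) c i *: b i)) /\
     (forall c : 'I_n -> k, I1 (\sum_(i < n) c i *: b i) -> forall i, c i = 0)) /\
  (* s' |-> <s'^r, -> is a bijection Hom_{P^1}(W,V) -> Hom_{P^1}(W,V)^* *)
  (forall s1 s2 : Mor P W V,
     (forall s : Mor P W V, pairing (rev W V s1) s = pairing (rev W V s2) s) ->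
     eq1 s1 s2) /\
  (forall phi : Mor P W V -> k,
     (forall (a : k) (x y : Mor P W V), phi (a *: x + y) = a * phi x + phi y) ->
     (forall x : Mor P W V, I1 x -> phi x = 0) ->
     exists s' : Mor P W V, forall s : Mor P W V, phi s = pairing (rev W V s') s).

Definition propA : Prop :=
  forall W : obj P,
  exists (m : nat) (f : 'I_m -> Mor P W (unitO P)) (g : 'I_m -> Mor P (unitO P) W),
    (forall i j : 'I_m,
        eq1 (cmp (f i) (g j)) (if i == j then idH (unitO P) else 0)) /\
    eq1 (\sum_(i < m) cmp (g i) (f i)) (idH W).

End P1.

(* Main.v *)
Require Import Defs.
From HB Require Import structures.
From mathcomp Require Import all_boot all_algebra.
From Stdlib Require Import ClassicalEpsilon ProofIrrelevance.
Set Implicit Arguments. Unset Strict Implicit. Unset Printing Implicit Defensive.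
Import GRing.Theory.
Local Open Scope ring_scope.
Section Cat.
Variables (k : comPzRingType) (P : ssmc_data k).
Hypothesis HP : is_ssmc P.

Ltac destr := case: HP => a1 [a2 [a3 [a4 [a5 [a6 [a7 [a8 [a9 [a10 [a11 [a12 [a13 [a14 [a15 [a16 a17]]]]]]]]]]]]]]].

Record HM := mkHM { hs : obj P; ht : obj P; hm : Mor P hs ht }.
Arguments mkHM {hs ht} hm.

Lemma mkHM_cast A A' B B' (e1 : A = A') (e2 : B = B') (f : Mor P A B) :
  mkHM (castH e1 e2 f) = mkHM f.
Proof. by case: A' / e1; case: B' / e2. Qed.

Lemma hm_inj X Y (f g : Mor P X Y) : mkHM f = mkHM g -> f = g.
Proof.
move=> H.
have: forall h : HM, forall (e1 : hs h = X) (e2 : ht h = Y),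
    h = mkHM g -> castH e1 e2 (hm h) = g.
  move=> h e1 e2 E; subst h => /=.
  by rewrite (proof_irrelevance _ e1 erefl) (proof_irrelevance _ e2 erefl).
by move/(_ (mkHM f) erefl erefl H).
Qed.

Definition hcompm (g f : HM) : Mor P (hs f) (ht g) :=
  match excluded_middle_informative (ht f = hs g) with
  | left e => cmp (hm g) (castH erefl e (hm f))
  | right _ => 0 end.
Definition hcomp g f := mkHM (hcompm g f).
Definition htens (f g : HM) := mkHM (tensm (hm f) (hm g)).
Definition hid (X : obj P) := mkHM (idH X).
Definition hbr (X Y : obj P) := mkHM (braid X Y).
Definition hev (X : obj P) := mkHM (evm X).
Definition hco (X : obj P) := mkHM (coev X).

Lemma hcompE X Y Z (g : Mor P Y Z) (f : Mor P X Y) :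
  hcomp (mkHM g) (mkHM f) = mkHM (cmp g f).
Proof.
rewrite /hcomp /hcompm /=; case: excluded_middle_informative => [e|n]; last by [].
by rewrite (proof_irrelevance _ e erefl).
Qed.

Lemma hcompE' X X' Y Y' Z (g : Mor P Y' Z) (f : Mor P X Y) (e1 : X = X') (e2 : Y = Y') :
  hcomp (mkHM g) (mkHM f) = @mkHM X' Z (cmp g (castH e1 e2 f)).
Proof. case: X' / e1; move: g; case: Y' / e2 => g; exact: hcompE. Qed.

Ltac obq := rewrite /= ?tens_assoc ?tens_unitl ?tens_unitr ?tens_assoc ?tens_unitl ?tens_unitr.

Lemma hassoc (f g h : HM) : ht f = hs g -> ht g = hs h ->
  hcomp h (hcomp g f) = hcomp (hcomp h g) f.
Proof.
case: f => A B f; case: g => B' C g; case: h => C' D h /= e1 e2; subst.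
by rewrite !hcompE; destr; rewrite a1.
Qed.

Lemma hidl f : hcomp (hid (ht f)) f = f.
Proof. by case: f => A B f; rewrite /hid hcompE; destr; rewrite a2. Qed.
Lemma hidr f : hcomp f (hid (hs f)) = f.
Proof. by case: f => A B f; rewrite /hid hcompE; destr; rewrite a3. Qed.
Lemma hidl' f X : ht f = X -> hcomp (hid X) f = f.
Proof. by move<-; apply: hidl. Qed.
Lemma hidr' f X : hs f = X -> hcomp f (hid X) = f.
Proof. by move<-; apply: hidr. Qed.

Lemma hxch f g f' g' : ht f = hs g -> ht f' = hs g' ->
  htens (hcomp g f) (hcomp g' f') = hcomp (htens g g') (htens f f').
Proof.
case: f => A B f; case: g => B1 C g; case: f' => A' B' f'; case: g' => B1' C' g' /= e1 e2.
subst. rewrite /htens !hcompE /=. by destr; rewrite a6.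
Qed.

Lemma htid A B : htens (hid A) (hid B) = hid (tens A B).
Proof. by rewrite /htens /hid /=; destr; rewrite a7. Qed.

Lemma htA f g h : htens (htens f g) h = htens f (htens g h).
Proof. case: f => ? ? f; case: g => ? ? g; case: h => ? ? h.
by rewrite /htens /=; destr; rewrite a10 mkHM_cast. Qed.

Lemma htl f : htens (hid (unitO P)) f = f.
Proof. case: f => ? ? f. by rewrite /htens /hid /=; destr; rewrite a11 mkHM_cast. Qed.
Lemma htru f : htens f (hid (unitO P)) = f.
Proof. case: f => ? ? f. by rewrite /htens /hid /=; destr; rewrite a12 mkHM_cast. Qed.

Lemma hnat f g : hcomp (hbr (ht f) (ht g)) (htens f g) = hcomp (htens g f) (hbr (hs f) (hs g)).
Proof. case: f => ? ? f; case: g => ? ? g. by rewrite /htens /hbr /= !hcompE; destr; rewrite a13. Qed.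

Lemma hinv A B : hcomp (hbr B A) (hbr A B) = hid (tens A B).
Proof. by rewrite /hbr hcompE; destr; rewrite a14. Qed.

Lemma hhex A B C : hbr A (tens B C) = hcomp (htens (hid B) (hbr A C)) (htens (hbr A B) (hid C)).
Proof.
rewrite /hbr /htens /hid /=; destr; rewrite a15 mkHM_cast.
by rewrite (hcompE' _ _ (tens_assoc A B C) (tens_assoc B A C)).
Qed.

Lemma hzig1 A : hcomp (htens (hid A) (hev A)) (htens (hco A) (hid A)) = hid A.
Proof.
rewrite /hev /hco /htens /hid /=; destr; move: (a16 A) => /(congr1 (@mkHM _ _)).
rewrite mkHM_cast => <-.
by rewrite (hcompE' _ _ (tens_unitl A) (tens_assoc A (dualO A) A)).
Qed.

Lemma hzig2 A : hcomp (htens (hev A) (hid (dualO A))) (htens (hid (dualO A)) (hco A)) = hid (dualO A).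
Proof.
rewrite /hev /hco /htens /hid /=; destr; move: (a17 A) => /(congr1 (@mkHM _ _)).
rewrite mkHM_cast => <-.
by rewrite (hcompE' _ _ (tens_unitr (dualO A)) (esym (tens_assoc (dualO A) A (dualO A)))).
Qed.

Ltac sc := try by obq.

Lemma T1 g h Y U : Y = ht g -> U = hs h ->
  hcomp (htens (hid Y) h) (htens g (hid U)) = htens g h.
Proof. move=> -> ->. by rewrite -hxch // hidl hidr. Qed.

Lemma T2 g h V X : V = ht h -> X = hs g ->
  hcomp (htens g (hid V)) (htens (hid X) h) = htens g h.
Proof. move=> -> ->. by rewrite -hxch // hidl hidr. Qed.

Lemma hidid X : hcomp (hid X) (hid X) = hid X.
Proof. exact: (hidl (hid X)). Qed.

Lemma TIl f g X : ht f = hs g ->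
  htens (hid X) (hcomp g f) = hcomp (htens (hid X) g) (htens (hid X) f).
Proof. move=> e. by rewrite -hxch // hidid. Qed.

Lemma TIr f g X : ht f = hs g ->
  htens (hcomp g f) (hid X) = hcomp (htens g (hid X)) (htens f (hid X)).
Proof. move=> e. by rewrite -hxch // hidid. Qed.

Lemma hnat' f g X Y X' Y' : X = ht f -> Y = ht g -> X' = hs f -> Y' = hs g ->
  hcomp (hbr X Y) (htens f g) = hcomp (htens g f) (hbr X' Y').
Proof. move=> -> -> -> ->; exact: hnat. Qed.

Lemma slide0 g h Y V : hs g = unitO P -> hs h = unitO P -> Y = ht g -> V = ht h ->
  hcomp (htens (hid Y) h) g = hcomp (htens g (hid V)) h.
Proof.
move=> eg eh eY eV.
have E1 := T1 eY (esym eh). rewrite htru in E1.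
have E2 := T2 eV (esym eg). rewrite htl in E2.
by rewrite E1 E2.
Qed.

Lemma slide0' g h X U : ht g = unitO P -> ht h = unitO P -> X = hs g -> U = hs h ->
  hcomp h (htens g (hid U)) = hcomp g (htens (hid X) h).
Proof.
move=> eg eh eX eU.
have E1 := T1 (esym eg) eU. rewrite htl in E1.
have E2 := T2 (esym eh) eX. rewrite htru in E2.
by rewrite E1 E2.
Qed.

Lemma braid_unit X : hbr (unitO P) X = hid X.
Proof.
set c := hbr X (unitO P).
have cc : hcomp c c = c.
  have := hhex X (unitO P) (unitO P). rewrite htl htru tens_unitl. by move<-.
have bc : hcomp (hbr (unitO P) X) c = hid X.
  by rewrite hinv tens_unitr.
have cid : c = hid X.
  rewrite -[LHS](@hidl' c X); sc.
  rewrite -{1}bc -hassoc; sc. by rewrite cc.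
rewrite -(@hidr' (hbr (unitO P) X) X); sc. by rewrite -{1}cid bc.
Qed.

Definition htrace W h := hcomp (hev W) (hcomp (hbr W (dualO W)) (hcomp (htens h (hid (dualO W))) (hco W))).

Lemma ctrE W (f : Mor P W W) : mkHM (ctr f) = htrace W (mkHM f).
Proof. by rewrite /htrace /htens /hid /hbr /hev /hco /= !hcompE. Qed.

Lemma htr_unit (y : Mor P (unitO P) (unitO P)) : htrace (unitO P) (mkHM y) = mkHM y.
Proof.
rewrite /htrace braid_unit.
rewrite (@hidl' _ (dualO (unitO P))); sc.
rewrite hassoc; sc.
rewrite (@slide0' (mkHM y) (hev (unitO P)) (unitO P)); sc.
rewrite htl -hassoc; sc.
have Z := hzig1 (unitO P). rewrite htl htru in Z. rewrite Z.
exact: (hidr (mkHM y)).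
Qed.

Lemma EH (s1 s2 : Mor P (unitO P) (unitO P)) : tens0 s1 s2 = cmp s1 s2.
Proof.
apply: hm_inj. rewrite /tens0 mkHM_cast -hcompE.
have -> : mkHM (tensm s1 s2) = htens (mkHM s1) (mkHM s2) by [].
rewrite -{1}(hidr (mkHM s1)) -{1}(hidl (mkHM s2)) hxch //.
by rewrite htru htl.
Qed.

Section Mate.
Variables (A B : obj P) (f : Mor P A B).
Let F := mkHM f.
Definition mateR := hcomp (hcomp (htens (hev B) (hid (dualO A)))
   (htens (htens (hid (dualO B)) F) (hid (dualO A)))) (htens (hid (dualO B)) (hco A)).
Definition mate : Mor P (dualO B) (dualO A) :=
  castH (tens_unitr (dualO B)) (tens_unitl (dualO A)) (hm mateR).
Lemma mateE : mkHM mate = mateR.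
Proof. by rewrite /mate mkHM_cast. Qed.

Lemma S1 : hcomp (htens F (hid (dualO A))) (hco A) = hcomp (htens (hid B) (mkHM mate)) (hco B).
Proof.
rewrite mateE /mateR.
rewrite TIl; sc. rewrite TIl; sc.
rewrite -(hassoc (f:=hco B)); sc.
rewrite -(htA (hid B) (hid (dualO B)) (hco A)) htid.
rewrite (@slide0 (hco B) (hco A) _ (tens A (dualO A))); sc.
rewrite (hassoc (f:=hco A)); sc.
rewrite -(hassoc (f:=htens (hco B) (hid (tens A (dualO A))))); sc.
have -> : htens (hid B) (htens (htens (hid (dualO B)) F) (hid (dualO A)))
   = htens (htens (hid (tens B (dualO B))) F) (hid (dualO A)) by rewrite -htid !htA.
have -> : htens (hco B) (hid (tens A (dualO A))) = htens (htens (hco B) (hid A)) (hid (dualO A))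
   by rewrite -htid htA.
rewrite -TIr; sc.
rewrite (T1 (h:=F)); sc.
rewrite -(@T2 (hco B) F B (unitO P)) // htl.
rewrite TIr; sc.
rewrite (hassoc (f:=htens F (hid (dualO A)))); sc.
have -> : htens (hid B) (htens (hev B) (hid (dualO A))) = htens (htens (hid B) (hev B)) (hid (dualO A))
   by rewrite htA.
rewrite -TIr; sc.
rewrite hzig1 htid.
rewrite (@hidl' _ (tens B (dualO A))); sc.
Qed.

Lemma S2 : hcomp (hev A) (htens (mkHM mate) (hid A)) = hcomp (hev B) (htens (hid (dualO B)) F).
Proof.
rewrite mateE /mateR.
rewrite TIr; sc. rewrite TIr; sc.
rewrite (hassoc (h:=hev A)); sc. rewrite (hassoc (h:=hev A)); sc.
have -> : htens (htens (hev B) (hid (dualO A))) (hid A) = htens (hev B) (hid (tens (dualO A) A))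
  by rewrite htA htid.
rewrite (@slide0' (hev B) (hev A) (tens (dualO B) B) (tens (dualO A) A)); sc.
rewrite -(hassoc (h:=hev B)); sc. rewrite -(hassoc (h:=hev B)); sc.
have -> : htens (hid (tens (dualO B) B)) (hev A) = htens (hid (dualO B)) (htens (hid B) (hev A))
  by rewrite -htid htA.
have -> : htens (htens (htens (hid (dualO B)) F) (hid (dualO A))) (hid A)
   = htens (hid (dualO B)) (htens F (hid (tens (dualO A) A))) by rewrite -htid !htA.
rewrite -TIl; sc.
rewrite (T1 (h:=hev A)); sc.
rewrite -(@T2 F (hev A) (unitO P) A) // htru.
have -> : htens (htens (hid (dualO B)) (hco A)) (hid A) = htens (hid (dualO B)) (htens (hco A) (hid A))
  by rewrite htA.
rewrite -TIl; sc.
rewrite -(hassoc (h:=F)); sc. by rewrite hzig1 hidr.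
Qed.
End Mate.
Lemma cycHM A B (f : Mor P A B) (g : Mor P B A) :
  htrace A (hcomp (mkHM g) (mkHM f)) = htrace B (hcomp (mkHM f) (mkHM g)).
Proof.
rewrite /htrace.
rewrite TIr; sc. rewrite -(hassoc (f:=hco A)); sc. rewrite S1.
rewrite (hassoc (f:=hco B)); sc.
rewrite (@T2 (mkHM g) (mkHM (mate f)) (dualO A) B) //.
rewrite -(@T1 (mkHM g) (mkHM (mate f)) A (dualO B)) //.
rewrite -(hassoc (f:=hco B)); sc.
rewrite (hassoc (h:=hbr A (dualO A))); sc.
rewrite (@hnat' (hid A) (mkHM (mate f)) A (dualO A) A (dualO B)) //.
rewrite (hassoc (h:=hev A)); sc. rewrite (hassoc (h:=hev A)); sc.
rewrite S2.
rewrite -(hassoc (h:=hev B)); sc.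
rewrite -(@hnat' (mkHM f) (hid (dualO B)) B (dualO B) A (dualO B)) //.
rewrite TIr; sc.
rewrite -(hassoc (h:=hev B)); sc.
rewrite -(hassoc (h:=hbr B (dualO B))); sc.
by rewrite -(hassoc (f:=hco B)); sc.
Qed.

Lemma ctr_cyc A B (f : Mor P A B) (g : Mor P B A) : ctr (cmp g f) = ctr (cmp f g).
Proof. apply: hm_inj; rewrite !ctrE -!hcompE; exact: cycHM. Qed.

Lemma ctr_unit (y : Mor P (unitO P) (unitO P)) : ctr y = y.
Proof. apply: hm_inj; rewrite ctrE; exact: htr_unit. Qed.

End Cat.
Section Lin.
Variables (k : comPzRingType) (U V : lmodType k) (phi : U -> V).
Hypothesis Hphi : forall a x y, phi (a *: x + y) = a *: phi x + phi y.
Lemma lin0 : phi 0 = 0.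
Proof.
have H := Hphi 1 0 0. rewrite !scale1r !addr0 in H.
have: phi 0 + phi 0 = phi 0 + 0 by rewrite addr0 -H.
by move/addrI.
Qed.
Lemma linD x y : phi (x + y) = phi x + phi y.
Proof. by have := Hphi 1 x y; rewrite !scale1r. Qed.
Lemma linZ a x : phi (a *: x) = a *: phi x.
Proof. by have := Hphi a x 0; rewrite !addr0 lin0 addr0. Qed.
Lemma linN x : phi (- x) = - phi x.
Proof. by rewrite -scaleN1r linZ scaleN1r. Qed.
Lemma linB x y : phi (x - y) = phi x - phi y.
Proof. by rewrite linD linN. Qed.
Lemma linsum n (F : 'I_n -> U) : phi (\sum_(i < n) F i) = \sum_(i < n) phi (F i).
Proof. exact: (big_morph phi linD lin0). Qed.
End Lin.

Section Sc.
Variables (k : comPzRingType) (U : lmodType k) (phi : U -> k).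
Hypothesis Hphi : forall a x y, phi (a *: x + y) = a * phi x + phi y.
Let phi' : U -> k^o := phi.
Let Hphi' : forall a x y, phi' (a *: x + y) = a *: phi' x + phi' y.
Proof. exact: Hphi. Qed.
Lemma slin0 : phi 0 = 0. Proof. exact: (lin0 Hphi'). Qed.
Lemma slinD x y : phi (x + y) = phi x + phi y. Proof. exact: (linD Hphi'). Qed.
Lemma slinZ a x : phi (a *: x) = a * phi x. Proof. exact: (linZ Hphi'). Qed.
Lemma slinN x : phi (- x) = - phi x. Proof. exact: (linN Hphi'). Qed.
Lemma slinB x y : phi (x - y) = phi x - phi y. Proof. exact: (linB Hphi'). Qed.
Lemma slinsum n (F : 'I_n -> U) : phi (\sum_(i < n) F i) = \sum_(i < n) phi (F i).
Proof. exact: (linsum Hphi'). Qed.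
End Sc.

Section Alg.
Variables (k : comPzRingType) (P : ssmc_data k) (ev : Mor P (unitO P) (unitO P) -> k).
Hypothesis HP : is_ssmc P.
Hypothesis Hlin : ev_linear ev.
Hypothesis Hmul : ev_multiplicative ev.
Local Notation E := (unitO P).

Ltac destr := case: HP => a1 [a2 [a3 [a4 [a5 [a6 [a7 [a8 [a9 [a10 [a11 [a12 [a13 [a14 [a15 [a16 a17]]]]]]]]]]]]]]].

Lemma cmpA A B C D (h : Mor P C D) (g : Mor P B C) (f : Mor P A B) :
  cmp h (cmp g f) = cmp (cmp h g) f.
Proof. by destr; rewrite a1. Qed.
Lemma cmp1l A B (f : Mor P A B) : cmp (idH B) f = f. Proof. by destr; rewrite a2. Qed.
Lemma cmp1r A B (f : Mor P A B) : cmp f (idH A) = f. Proof. by destr; rewrite a3. Qed.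
Lemma linl A B C (f : Mor P A B) : forall a (x y : Mor P B C), cmp (a *: x + y) f = a *: cmp x f + cmp y f.
Proof. by destr; move=> a x y; rewrite a4. Qed.
Lemma linr A B C (g : Mor P B C) : forall a (x y : Mor P A B), cmp g (a *: x + y) = a *: cmp g x + cmp g y.
Proof. by destr; move=> a x y; rewrite a5. Qed.
Lemma lintl A B C D (g : Mor P C D) : forall a (x y : Mor P A B), tensm (a *: x + y) g = a *: tensm x g + tensm y g.
Proof. by destr; move=> a x y; rewrite a8. Qed.

Lemma ctr_lin W : forall a (x y : Mor P W W), ctr (a *: x + y) = a *: ctr x + ctr y.
Proof.
move=> a x y; rewrite /ctr lintl linl !linr. done.
Qed.


Lemma pr_linr W W' (s' : Mor P W' W) : forall a (x y : Mor P W W'), pairing ev s' (a *: x + y) = a * pairing ev s' x + pairing ev s' y.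
Proof. by move=> a x y; rewrite /pairing linr ctr_lin Hlin. Qed.
Lemma pr_linl W W' (s : Mor P W W') : forall a (x y : Mor P W' W), pairing ev (a *: x + y) s = a * pairing ev x s + pairing ev y s.
Proof. by move=> a x y; rewrite /pairing linl ctr_lin Hlin. Qed.

Section Fix.
Variables (A B : obj P).
Lemma cmpDl C (f : Mor P A B) (x y : Mor P B C) : cmp (x + y) f = cmp x f + cmp y f.
Proof. exact: (linD (linl f)). Qed.
Lemma cmpZl C (f : Mor P A B) a (x : Mor P B C) : cmp (a *: x) f = a *: cmp x f.
Proof. exact: (linZ (linl f)). Qed.
Lemma cmp0l C (f : Mor P A B) : cmp (0 : Mor P B C) f = 0.
Proof. exact: (lin0 (linl f)). Qed.
Lemma cmpBl C (f : Mor P A B) (x y : Mor P B C) : cmp (x - y) f = cmp x f - cmp y f.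
Proof. exact: (linB (linl f)). Qed.
Lemma cmpsuml C (f : Mor P A B) n (F : 'I_n -> Mor P B C) : cmp (\sum_(i < n) F i) f = \sum_(i < n) cmp (F i) f.
Proof. exact: (linsum (linl f)). Qed.
Lemma cmpDr C (g : Mor P B C) (x y : Mor P A B) : cmp g (x + y) = cmp g x + cmp g y.
Proof. exact: (linD (linr g)). Qed.
Lemma cmpZr C (g : Mor P B C) a (x : Mor P A B) : cmp g (a *: x) = a *: cmp g x.
Proof. exact: (linZ (linr g)). Qed.
Lemma cmp0r C (g : Mor P B C) : cmp g (0 : Mor P A B) = 0.
Proof. exact: (lin0 (linr g)). Qed.
Lemma cmpBr C (g : Mor P B C) (x y : Mor P A B) : cmp g (x - y) = cmp g x - cmp g y.
Proof. exact: (linB (linr g)). Qed.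
Lemma cmpsumr C (g : Mor P B C) n (F : 'I_n -> Mor P A B) : cmp g (\sum_(i < n) F i) = \sum_(i < n) cmp g (F i).
Proof. exact: (linsum (linr g)). Qed.

Lemma I1_0 : I1 ev (0 : Mor P A B).
Proof. move=> s'. exact: (slin0 (pr_linr s')). Qed.
Lemma I1_D (x y : Mor P A B) : I1 ev x -> I1 ev y -> I1 ev (x + y).
Proof. move=> hx hy s'. by rewrite (slinD (pr_linr s')) [pairing _ _ _]hx [pairing _ _ _]hy addr0. Qed.
Lemma I1_Z a (x : Mor P A B) : I1 ev x -> I1 ev (a *: x).
Proof. move=> hx s'. by rewrite (slinZ (pr_linr s')) [pairing _ _ _]hx mulr0. Qed.
Lemma I1_N (x : Mor P A B) : I1 ev x -> I1 ev (- x).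
Proof. by move=> hx; rewrite -scaleN1r; apply: I1_Z. Qed.
Lemma I1_B (x y : Mor P A B) : I1 ev x -> I1 ev y -> I1 ev (x - y).
Proof. by move=> hx hy; apply: I1_D => //; apply: I1_N. Qed.
Lemma I1_sum n (F : 'I_n -> Mor P A B) : (forall i, I1 ev (F i)) -> I1 ev (\sum_(i < n) F i).
Proof. move=> H. apply: (big_ind (fun x => I1 ev x)) => //; [exact: I1_0 | exact: I1_D]. Qed.

Lemma eq1_refl (s : Mor P A B) : eq1 ev s s.
Proof. rewrite /eq1 subrr; exact: I1_0. Qed.
Lemma eq1_sym (s t : Mor P A B) : eq1 ev s t -> eq1 ev t s.
Proof. rewrite /eq1 => h; rewrite -opprB; exact: I1_N. Qed.
Lemma eq1_trans (s t u : Mor P A B) : eq1 ev s t -> eq1 ev t u -> eq1 ev s u.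
Proof. rewrite /eq1 => h1 h2. have -> : s - u = (s - t) + (t - u) by rewrite addrA subrK. exact: I1_D. Qed.
Lemma eq1_D (s t s' t' : Mor P A B) : eq1 ev s t -> eq1 ev s' t' -> eq1 ev (s + s') (t + t').
Proof. rewrite /eq1 => h1 h2. rewrite opprD addrACA. exact: I1_D. Qed.
Lemma eq1_Z a (s t : Mor P A B) : eq1 ev s t -> eq1 ev (a *: s) (a *: t).
Proof. rewrite /eq1 => h. rewrite -scalerBr. exact: I1_Z. Qed.
Lemma eq1_sum n (F G : 'I_n -> Mor P A B) : (forall i, eq1 ev (F i) (G i)) ->
  eq1 ev (\sum_(i < n) F i) (\sum_(i < n) G i).
Proof. move=> H. rewrite /eq1 -sumrB. exact: I1_sum. Qed.
End Fix.

Lemma I1_post A B C (t : Mor P B C) (x : Mor P A B) : I1 ev x -> I1 ev (cmp t x).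
Proof. move=> hx s'. rewrite /pairing cmpA. exact: hx. Qed.
Lemma I1_pre A B C (x : Mor P B C) (u : Mor P A B) : I1 ev x -> I1 ev (cmp x u).
Proof.
move=> hx s'. rewrite /pairing cmpA (ctr_cyc HP) cmpA. exact: hx.
Qed.
Lemma eq1_post A B C (u : Mor P B C) (s t : Mor P A B) : eq1 ev s t -> eq1 ev (cmp u s) (cmp u t).
Proof. rewrite /eq1 -cmpBr. exact: I1_post. Qed.
Lemma eq1_pre A B C (u : Mor P A B) (s t : Mor P B C) : eq1 ev s t -> eq1 ev (cmp s u) (cmp t u).
Proof. rewrite /eq1 -cmpBl. exact: I1_pre. Qed.
Lemma eq1_cmp A B C (s t : Mor P B C) (s' t' : Mor P A B) : eq1 ev s t -> eq1 ev s' t' ->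
  eq1 ev (cmp s s') (cmp t t').
Proof. move=> h1 h2. apply: eq1_trans (eq1_pre _ h1). exact: eq1_post. Qed.

Lemma evM (a b : Mor P E E) : ev (cmp a b) = ev a * ev b.
Proof. by rewrite -(EH HP) Hmul.2. Qed.
Lemma ev1 : ev (idH E) = 1. Proof. exact: Hmul.1. Qed.
Lemma ev_scalar (s : Mor P E E) : eq1 ev s (ev s *: idH E).
Proof.
move=> y. rewrite /pairing (ctr_unit HP) cmpBr cmpZr cmp1r (slinB Hlin) (slinZ Hlin) evM.
by rewrite mulrC subrr.
Qed.
Lemma ev_I1 (x : Mor P E E) : I1 ev x -> ev x = 0.
Proof. move=> h. have := h (idH E). by rewrite /pairing cmp1l (ctr_unit HP). Qed.
Lemma ev_eq1 (s t : Mor P E E) : eq1 ev s t -> ev s = ev t.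
Proof. move/ev_I1. rewrite (slinB Hlin). by move/eqP; rewrite subr_eq0 => /eqP. Qed.
Lemma pr_state W (g : Mor P E W) (f : Mor P W E) : pairing ev g f = ev (cmp f g).
Proof. by rewrite /pairing (ctr_cyc HP) (ctr_unit HP). Qed.
Lemma pr_gen W V (g : Mor P E W) (h : Mor P V E) (s : Mor P W V) :
  pairing ev (cmp g h) s = ev (cmp (cmp h s) g).
Proof. by rewrite /pairing -cmpA (ctr_cyc HP) (ctr_unit HP). Qed.

Lemma sum_delta (V : lmodType k) n (F : 'I_n -> V) j :
  \sum_(i < n) (i == j)%:R *: F i = F j.
Proof.
rewrite (bigD1 j) //= eqxx scale1r big1 ?addr0 // => i /negbTE ->. by rewrite scale0r.
Qed.

Lemma delta_ev (m : nat) (i j : 'I_m) (X : Mor P E E) :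
  eq1 ev X (if i == j then idH E else 0) -> ev X = (i == j)%:R.
Proof. move/ev_eq1 => ->. case: eqP => _ /=; [exact: ev1 | exact: (slin0 Hlin)]. Qed.

Lemma A_M' : propA ev -> propM' ev.
Proof.
move=> hA W W' s. have [m [f [g [_ hs]]]] := hA W.
exists m, (fun i => cmp s (g i)), f.
have h := eq1_post s hs. rewrite cmp1r cmpsumr in h.
apply: eq1_sym. under eq_bigr do rewrite -cmpA. exact: h.
Qed.

Definition cid {A : Type} {Q : A -> Prop} (h : exists x, Q x) := constructive_indefinite_description Q h.

Section AF.
Variables (V W : obj P) (m n : nat) (f : 'I_m -> Mor P W E) (g : 'I_m -> Mor P E W)
  (f' : 'I_n -> Mor P V E) (g' : 'I_n -> Mor P E V).
Hypothesis hW : (forall i j : 'I_m, eq1 ev (cmp (f i) (g j)) (if i == j then idH E else 0)) /\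
    eq1 ev (\sum_(i < m) cmp (g i) (f i)) (idH W).
Hypothesis hV : (forall i j : 'I_n, eq1 ev (cmp (f' i) (g' j)) (if i == j then idH E else 0)) /\
    eq1 ev (\sum_(i < n) cmp (g' i) (f' i)) (idH V).
Let N := #|{: 'I_m * 'I_n}|.
Definition bas (q : 'I_N) : Mor P W V := cmp (g' (enum_val q).2) (f (enum_val q).1).
Definition coef (s : Mor P W V) (q : 'I_N) : k := ev (cmp (f' (enum_val q).2) (cmp s (g (enum_val q).1))).

Lemma span_A (s : Mor P W V) : eq1 ev s (\sum_(q < N) coef s q *: bas q).
Proof.
have h1 : eq1 ev (cmp (\sum_(j < n) cmp (g' j) (f' j)) (cmp s (\sum_(i < m) cmp (g i) (f i))))
               (cmp (idH V) (cmp s (idH W))).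
  apply: eq1_cmp; first exact: hV.2. apply: eq1_post. exact: hW.2.
rewrite cmp1l cmp1r in h1. apply: eq1_trans (eq1_sym h1) _.
rewrite cmpsumr cmpsuml.
have -> : \sum_(q < N) coef s q *: bas q =
   \sum_(j < n) \sum_(i < m) (ev (cmp (f' j) (cmp s (g i))) *: cmp (g' j) (f i)).
  rewrite exchange_big pair_big /=.
  by rewrite (big_enum_val (fun p : 'I_m * 'I_n => ev (cmp (f' p.2) (cmp s (g p.1))) *: cmp (g' p.2) (f p.1))).
apply: eq1_sum => j. rewrite cmpsumr. apply: eq1_sum => i.
have -> : cmp (cmp (g' j) (f' j)) (cmp s (cmp (g i) (f i))) =
   cmp (g' j) (cmp (cmp (f' j) (cmp s (g i))) (f i)) by rewrite !cmpA.
set X := cmp (f' j) (cmp s (g i)).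
have := eq1_post (g' j) (eq1_pre (f i) (ev_scalar X)).
by rewrite cmpZl cmp1l cmpZr.
Qed.

Lemma indep_A (c : 'I_N -> k) : I1 ev (\sum_(q < N) c q *: bas q) -> forall q, c q = 0.
Proof.
move=> h q0.
set p0 := enum_val q0.
have h2 := ev_I1 (I1_post (f' p0.2) (I1_pre (g p0.1) h)).
rewrite cmpsuml cmpsumr (slinsum Hlin) in h2.
rewrite -{}h2 (bigD1 q0) //= big1 ?addr0.
  rewrite cmpZl cmpZr (slinZ Hlin) /bas.
  have -> : cmp (f' p0.2) (cmp (cmp (g' p0.2) (f p0.1)) (g p0.1)) =
     cmp (cmp (f' p0.2) (g' p0.2)) (cmp (f p0.1) (g p0.1)) by rewrite !cmpA.
  rewrite evM (delta_ev (hV.1 _ _)) (delta_ev (hW.1 _ _)) !eqxx. by rewrite mulr1 mulr1.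
move=> q /negbTE nq.
rewrite cmpZl cmpZr (slinZ Hlin) /bas.
have -> : cmp (f' p0.2) (cmp (cmp (g' (enum_val q).2) (f (enum_val q).1)) (g p0.1)) =
   cmp (cmp (f' p0.2) (g' (enum_val q).2)) (cmp (f (enum_val q).1) (g p0.1)) by rewrite !cmpA.
rewrite evM (delta_ev (hV.1 _ _)) (delta_ev (hW.1 _ _)).
have : enum_val q != p0 by rewrite /p0 (inj_eq enum_val_inj) nq.
case: (enum_val q) => a b /=. rewrite /p0. case: (enum_val q0) => a0 b0 /=.
rewrite xpair_eqE negb_and => /orP [] /negbTE.
  by rewrite eq_sym => ->; rewrite mulr0 mulr0.
by rewrite eq_sym => ->; rewrite mul0r mulr0.
Qed.

Lemma rep_A (rev : forall A B : obj P, Mor P A B -> Mor P B A)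
  (Hrev2 : forall A B (x : Mor P A B), rev B A (rev A B x) = x)
  (phi : Mor P W V -> k) (hl : forall a x y, phi (a *: x + y) = a * phi x + phi y)
  (h0 : forall x, I1 ev x -> phi x = 0) :
  exists s' : Mor P W V, forall s, phi s = pairing ev (rev W V s') s.
Proof.
exists (rev V W (\sum_(q < N) phi (bas q) *: cmp (g (enum_val q).1) (f' (enum_val q).2))).
move=> s. rewrite Hrev2.
have e : phi s = phi (\sum_(q < N) coef s q *: bas q).
  have := h0 _ (span_A s). rewrite (slinB hl). by move/eqP; rewrite subr_eq0 => /eqP.
rewrite e (slinsum hl) (slinsum (pr_linl s)).
apply: eq_bigr => q _. rewrite (slinZ hl) (slinZ (pr_linl s)) pr_gen /coef -cmpA.
by rewrite mulrC.
Qed.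
End AF.
Local Unset Implicit Arguments.
Section Rev.
Variables (iota : {rmorphism k -> k}) (rev : forall A B : obj P, Mor P A B -> Mor P B A).
Hypothesis Hinv : involutive iota.
Hypothesis Hrev : is_reversal iota rev.
Hypothesis Hevrev : forall s : Mor P E E, ev (rev _ _ s) = iota (ev s).

Lemma rev2 A B (x : Mor P A B) : rev B A (rev A B x) = x.
Proof. by case: Hrev => _ [h _]. Qed.
Lemma revB A B (x y : Mor P A B) : rev A B (x - y) = rev A B x - rev A B y.
Proof.
case: Hrev => h1 _. have -> : x - y = (-1) *: y + x by rewrite scaleN1r addrC.
by rewrite h1 rmorphN1 scaleN1r addrC.
Qed.
Lemma revpair W V (x s : Mor P W V) :
  pairing ev (rev W V x) s = iota (pairing ev (rev W V s) x).
Proof.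
case: Hrev => _ [h2 [h3 h4]].
rewrite /pairing. have -> : cmp (rev W V x) s = rev W W (cmp (rev W V s) x) by rewrite h3 h2.
by rewrite h4 Hevrev.
Qed.

Lemma F2 W V (s1 s2 : Mor P W V) :
  (forall s, pairing ev (rev W V s1) s = pairing ev (rev W V s2) s) -> eq1 ev s1 s2.
Proof.
move=> h y.
have -> : y = rev W V (rev V W y) by rewrite rev2.
rewrite revpair revB (slinB (pr_linl _)) h subrr. exact: rmorph0.
Qed.

Lemma FM_A : propF ev rev -> propM' ev -> propA ev.
Proof.
move=> hF hM W. have [[n [b [hspan hind]]] [_ h3]] := hF E W.
pose cf s := sval (cid (hspan s)).
have cfP : forall s, eq1 ev s (\sum_(i < n) cf s i *: b i) := fun s => svalP (cid (hspan s)).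
have uniq : forall c d : 'I_n -> k, eq1 ev (\sum_(i < n) c i *: b i) (\sum_(i < n) d i *: b i) ->
    forall i, c i = d i.
  move=> c d h i. apply/eqP; rewrite -subr_eq0; apply/eqP.
  apply: (hind (fun i => c i - d i)). rewrite /eq1 in h.
  have -> : \sum_(i < n) (c i - d i) *: b i = \sum_(i < n) c i *: b i - \sum_(i < n) d i *: b i.
    by rewrite -sumrB; apply: eq_bigr => j _; rewrite scalerBl.
  exact: h.
have cf_lin : forall i a x y, cf (a *: x + y) i = a * cf x i + cf y i.
  move=> i a x y.
  apply: (uniq (cf (a *: x + y)) (fun i => a * cf x i + cf y i)).
  apply: eq1_trans (eq1_sym (cfP _)) _.
  apply: eq1_trans (eq1_D (eq1_Z a (cfP x)) (cfP y)) _.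
  suff -> : a *: \sum_(i < n) cf x i *: b i + \sum_(i < n) cf y i *: b i =
            \sum_(i < n) (a * cf x i + cf y i) *: b i by apply: eq1_refl.
  rewrite scaler_sumr -big_split; apply: eq_bigr => j _. by rewrite scalerDl scalerA.
have cf_I1 : forall x, I1 ev x -> forall i, cf x i = 0.
  move=> x hx i. apply: (uniq (cf x) (fun _ => 0)).
  apply: eq1_trans (eq1_sym (cfP _)) _.
  rewrite big1 => [|j _]; last by rewrite scale0r.
  by rewrite /eq1 subr0.
pose gs i := sval (cid (h3 (fun s => cf s i) (fun a x y => cf_lin i a x y) (fun x hx => cf_I1 x hx i))).
have gsP : forall i s, cf s i = pairing ev (rev W E (gs i)) s :=
  fun i => svalP (cid (h3 (fun s => cf s i) (fun a x y => cf_lin i a x y) (fun x hx => cf_I1 x hx i))).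
exists n, b, (fun i => rev W E (gs i)).
have cf_b : forall i j, cf (b i) j = (i == j)%:R.
  move=> i. apply: (uniq (cf (b i)) (fun j => (i == j)%:R)).
  apply: eq1_trans (eq1_sym (cfP _)) _.
  rewrite (eq_bigr (fun j => (j == i)%:R *: b j)) => [|j _]; last by rewrite eq_sym.
  rewrite sum_delta. exact: eq1_refl.
have delta1 : forall i j, eq1 ev (cmp (b i) (rev W E (gs j))) ((i == j)%:R *: idH E).
  move=> i j. apply: eq1_trans (ev_scalar _) _.
  rewrite -pr_state -gsP cf_b. exact: eq1_refl.
split.
  move=> i j. apply: eq1_trans (delta1 i j) _.
  case: eqP => _; rewrite ?scale1r ?scale0r; exact: eq1_refl.
have [l [a [be hid]]] := hM W W (idH W).
pose h i := \sum_(t < l) cf (be t) i *: a t.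
have hid' : eq1 ev (idH W) (\sum_(i < n) cmp (h i) (b i)).
  apply: eq1_trans hid _.
  apply: eq1_trans (eq1_sum (fun t => eq1_post (a t) (cfP (be t)))) _.
  suff -> : \sum_(t < l) cmp (a t) (\sum_(i < n) cf (be t) i *: b i) =
            \sum_(i < n) cmp (h i) (b i) by apply: eq1_refl.
  under eq_bigr do rewrite cmpsumr.
  rewrite exchange_big. apply: eq_bigr => i _. rewrite /h cmpsuml. apply: eq_bigr => t _.
  by rewrite cmpZr cmpZl.
have gh : forall j, eq1 ev (rev W E (gs j)) (h j).
  move=> j.
  apply: eq1_trans (_ : eq1 ev _ (cmp (\sum_(i < n) cmp (h i) (b i)) (rev W E (gs j)))) _.
    rewrite -{1}(cmp1l (rev W E (gs j))). exact: eq1_pre _ hid'.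
  rewrite cmpsuml.
  apply: eq1_trans (eq1_sum (fun i => (_ : eq1 ev (cmp (cmp (h i) (b i)) (rev W E (gs j))) ((i == j)%:R *: h i)))) _.
    move=> i. rewrite -cmpA. have := eq1_post (h i) (delta1 i j). by rewrite cmpZr cmp1r.
  rewrite sum_delta. exact: eq1_refl.
apply: eq1_trans (eq1_sum (fun j => eq1_pre (b j) (gh j))) _.
exact: eq1_sym hid'.
Qed.
End Rev.
End Alg.
Unset Implicit Arguments.
Theorem mainTheorem8 (k : comPzRingType) (iota : {rmorphism k -> k})
  (P : ssmc_data k) (ev : Mor P (unitO P) (unitO P) -> k)
  (rev : forall A B : obj P, Mor P A B -> Mor P B A) :
  involutive iota ->
  is_ssmc P ->
  ev_linear ev ->
  ev_multiplicative ev ->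
  ev_involutive ev iota rev ->
  (propF ev rev /\ propM' ev) <-> propA ev.
Proof.
move=> Hinv HP Hlin Hmul [Hrev Hevrev].
split.
  case=> hF hM. exact: (@FM_A _ _ _ HP Hlin Hmul rev hF hM).
move=> hA. split; last exact: (A_M' HP Hlin hA).
move=> V W.
have [m [f [g hW]]] := hA W. have [n [f' [g' hV]]] := hA V.
have Hr2 : forall A B (x : Mor P A B), rev B A (rev A B x) = x.
  by case: Hrev => _ [h _].
split; [|split].
- exists _, (bas f g'). split.
    move=> s; exists (coef ev g f' s); exact: (span_A HP Hlin Hmul hW hV).
  exact: (indep_A HP Hlin Hmul hW hV).
- exact: (@F2 _ _ _ HP Hlin iota rev Hrev Hevrev).
- move=> phi hl h0. exact: (rep_A HP Hlin Hmul hW hV Hr2 hl h0).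
Qed.
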